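(* Let $\Gamma$ be a telescopic numerical semigroup minimally generated by $r_0<\cdots<r_h$ with $h\ge 2$, let $c=\mathrm c(\Gamma)$ and $d_h=\gcd(r_0,\ldots,r_{h-1})$. Then $$2^{h+1}-1\le r_h\le \frac{c}{d_h-1}-\big((h-2)2^h+2\big)\frac{d_h}{d_h-1}+1\le c-(h-2)2^h-1.$$
   Context: A numerical semigroup is a submonoid of $(\mathbb N,+)$ with finite complement in $\mathbb N$; it has a unique minimal generating system. $\mathrm F(\Gamma)$ is the largest integer not in $\Gamma$, and $\mathrm c(\Gamma)=\mathrm F(\Gamma)+1$. $\langle X\rangle$ is the submonoid generated by $X$. For an arrangement $(r_0,\ldots,r_h)$ of the minimal generators, set $d_k=\gcd(r_0,\ldots,r_{k-1})$. A set $A$ of positive integers with nontrivial partition $A=A_1\cup A_2$ is the gluing of $A_1$ and $A_2$ if $\mathrm{lcm}(\gcd A_1,\gcd A_2)\in\langle A_1\rangle\cap\langle A_2\rangle$. $\Gamma$ is free for $(r_0,\ldots,r_h)$ if $h=0$, or $h\ge1$, $\{r_0,\ldots,r_h\}$ is the gluing of $\{r_0,\ldots,r_{h-1}\}$ and $\{r_h\}$, and $\langle r_0/d_h,\ldots,r_{h-1}/d_h\rangle$ is free for $(r_0/d_h,\ldots,r_{h-1}/d_h)$. $\Gamma$ is telescopic if it is free for the arrangement of its minimal generators in increasing order. *)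

(* Defs.v *)
From mathcomp Require Import all_boot all_order all_algebra.
Set Implicit Arguments. Unset Strict Implicit. Unset Printing Implicit Defensive.

Inductive in_monoid (A : seq nat) : nat -> Prop :=
| in_monoid0 : in_monoid A 0
| in_monoidD a n : a \in A -> in_monoid A n -> in_monoid A (a + n).

Definition numerical_semigroup (G : nat -> Prop) : Prop :=
  [/\ G 0, (forall a b, G a -> G b -> G (a + b))
    & exists N, forall n, N <= n -> G n].

Definition minimal_generating_system (G : nat -> Prop) (A : seq nat) : Prop :=
  [/\ uniq A, (forall n, G n <-> in_monoid A n)
    & forall a, a \in A -> ~ in_monoid (rem a A) a].

Definition gcd_seq (s : seq nat) : nat := foldr gcdn 0 s.

Definition is_conductor (G : nat -> Prop) (c : nat) : Prop :=
  (forall n, c <= n -> G n) /\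
  (forall m, (forall n, m <= n -> G n) -> c <= m).

Definition glued (A1 A2 : seq nat) : Prop :=
  in_monoid A1 (lcmn (gcd_seq A1) (gcd_seq A2)) /\
  in_monoid A2 (lcmn (gcd_seq A1) (gcd_seq A2)).

Fixpoint free_fuel (k : nat) (r : seq nat) : Prop :=
  match k with
  | 0 => False
  | k'.+1 =>
      size r = 1 \/
      (1 < size r /\
       let p := take (size r).-1 r in
       let d := gcd_seq p in
       glued p [:: last 0 r] /\ free_fuel k' (map (fun x => x %/ d) p))
  end.

Definition free_for (r : seq nat) : Prop := free_fuel (size r) r.

Definition telescopic (G : nat -> Prop) (r : seq nat) : Prop :=
  minimal_generating_system G r /\ sorted ltn r /\ free_for r.

(* Main.v *)
Require Import Defs.
From mathcomp Require Import all_boot all_order all_algebra.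
From mathcomp Require Import zify ring lra.
Import Order.TTheory GRing.Theory Num.Theory.

Lemma im_add A m n : in_monoid A m -> in_monoid A n -> in_monoid A (m + n).
Proof. elim=> [|a k Ha _ IH] Hn; first by []. rewrite -addnA; exact: in_monoidD Ha (IH Hn). Qed.

Lemma im_sub A B n : {subset A <= B} -> in_monoid A n -> in_monoid B n.
Proof. move=> sAB; elim=> [|a m Ha _ IH]; [exact: in_monoid0| exact: in_monoidD (sAB _ Ha) IH]. Qed.

Lemma im_mul A k n : in_monoid A n -> in_monoid A (k * n).
Proof. move=> Hn; elim: k => [|k IH]; first by rewrite mul0n; constructor. rewrite mulSn; exact: im_add. Qed.

Lemma im_dvd A d n : (forall a, a \in A -> d %| a) -> in_monoid A n -> d %| n.
Proof. move=> HA; elim=> [|a m Ha _ IH]; [exact: dvdn0 | by rewrite dvdn_add // HA]. Qed.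

Lemma im_div A d n : (forall a, a \in A -> d %| a) -> in_monoid A n ->
  in_monoid (map (fun x => x %/ d) A) (n %/ d).
Proof. move=> HA; elim=> [|a m Ha _ IH]; first by rewrite div0n; constructor.
 rewrite divnDl ?HA //. apply: in_monoidD IH. exact: (map_f (fun x => x %/ d) Ha). Qed.

Lemma im_mulback A d n : (forall a, a \in A -> d %| a) ->
  in_monoid (map (fun x => x %/ d) A) n -> in_monoid A (d * n).
Proof. move=> HA; elim=> [|b m Hb _ IH]; first by rewrite muln0; constructor.
 case/mapP: Hb => a Ha ->. rewrite mulnDr [d * _]mulnC divnK ?HA //. exact: in_monoidD. Qed.

Lemma im_rcons p r n : in_monoid (rcons p r) n -> exists m x, in_monoid p x /\ n = x + m * r.
Proof. elim=> [|a k Ha _ [m [x [Hx ->]]]]; first by exists 0, 0; split; [constructor|].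
 rewrite mem_rcons in_cons in Ha. case/orP: Ha => [/eqP ->|Ha].
 - exists m.+1, x; split => //; rewrite mulSn; by rewrite addnCA.
 - exists m, (a + x); split; [exact: in_monoidD | by rewrite addnA].
Qed.

Lemma gcd_seq_dvd s a : a \in s -> gcd_seq s %| a.
Proof. rewrite /gcd_seq; elim: s => //= x s IH; rewrite in_cons => /orP [/eqP ->|Ha];
  [exact: dvdn_gcdl | exact: dvdn_trans (dvdn_gcdr _ _) (IH Ha)]. Qed.

Lemma gcd_seq_rcons p r : gcd_seq (rcons p r) = gcdn (gcd_seq p) r.
Proof. rewrite /gcd_seq; elim: p => [|x p IH] /=; first by rewrite gcdn0 gcd0n. by rewrite IH gcdnA. Qed.

Lemma gcd_seq_map_div p d : (forall a, a \in p -> d %| a) ->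
  gcd_seq (map (fun x => x %/ d) p) * d = gcd_seq p.
Proof. rewrite /gcd_seq; elim: p => [|x p IH] Hp /=; first by rewrite mul0n.
  rewrite muln_gcdl divnK ?Hp ?mem_head // IH //.
  by move=> a Ha; apply: Hp; rewrite in_cons Ha orbT. Qed.

Lemma im_one k : in_monoid [:: 1] k.
Proof. elim: k => [|k IH]; first constructor. by rewrite -add1n; exact: (@in_monoidD [:: 1] 1 k (mem_head _ _) IH). Qed.

Lemma im_ge2 A n : (forall a, a \in A -> 2 <= a) -> in_monoid A n -> n != 1.
Proof. move=> HA; case=> // a m Ha _; have := HA _ Ha; lia. Qed.

Definition incr (s : seq nat) := forall i j, i < j -> j < size s -> nth 0 s i < nth 0 s j.
Definition indep (s : seq nat) := forall k, k < size s -> ~ in_monoid (take k s) (nth 0 s k).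
Definition invs s := [/\ incr s, free_for s, gcd_seq s = 1 & indep s].

Lemma take_rc (p : seq nat) r k : k <= size p -> take k (rcons p r) = take k p.
Proof. by move=> Hk; rewrite -cats1 takel_cat. Qed.

Lemma free_S k s : free_fuel k.+1 s -> size s <> 1 ->
  glued (take (size s).-1 s) [:: last 0 s] /\
  free_fuel k (map (fun x => x %/ gcd_seq (take (size s).-1 s)) (take (size s).-1 s)).
Proof. by move=> [|[_ [H1 H2]]]. Qed.

Lemma glue_facts p r n : invs (rcons p r) -> size p = n.+1 ->
 let d := gcd_seq p in
 [/\ 2 <= d, coprime d r, in_monoid (map (fun x => x %/ d) p) r,
     (forall a, a \in p -> d %| a) & invs (map (fun x => x %/ d) p)].
Proof.
move=> [Hinc Hfr Hg Hind] Hp d.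
have Hdv : forall a, a \in p -> d %| a by move=> a; exact: gcd_seq_dvd.
have [Hgl Hfr'] : glued p [:: r] /\ free_for (map (fun x => x %/ d) p).
  move: Hfr; rewrite /free_for size_rcons Hp => /free_S.
  rewrite size_rcons -Hp /= take_rc // take_size last_rcons size_map => H.
  by apply: H; rewrite Hp.
have Hcop : coprime d r by rewrite /coprime -gcd_seq_rcons Hg.
have Hs0 : 0 < nth 0 p 0.
  have := Hind 0; rewrite size_rcons Hp take0 nth_rcons Hp /= => H.
  by case: (nth 0 p 0) H => // /(_ isT) []; constructor.
have Hd0 : 0 < d.
  have H0 : d %| nth 0 p 0 by apply: Hdv; rewrite mem_nth // Hp.
  rewrite lt0n; apply/negP => /eqP Hd; move: H0; rewrite Hd dvd0n; lia.
have Hd2 : 2 <= d.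
  have Hd1 : d != 1.
    apply/negP => /eqP Hd1; move: Hgl => [Hgl _].
    have := Hind (size p); rewrite size_rcons ltnSn take_rc // take_size nth_rcons ltnn eqxx.
    move/(_ isT); apply; move: Hgl; by rewrite /gcd_seq /= gcdn0 -/(gcd_seq p) -/d Hd1 lcm1n.
  lia.
have Hr' : in_monoid (map (fun x => x %/ d) p) r.
  move: Hgl => [Hgl _]; move: Hgl; rewrite /gcd_seq /= gcdn0 -/(gcd_seq p) -/d.
  have -> : lcmn d r = d * r.
    by have := muln_lcm_gcd d r; move: Hcop; rewrite /coprime => /eqP ->; rewrite muln1.
  move/(im_div p d _ Hdv); by rewrite mulKn.
split => //; split => //.
- move=> i j Hij; rewrite size_map => Hj.
  rewrite !(nth_map 0) //; last by lia.
  have := Hinc i j Hij; rewrite size_rcons !nth_rcons Hj (ltn_trans Hij Hj) => /(_ (leqW Hj)).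
  have Hi : nth 0 p i \in p. apply: mem_nth; exact: ltn_trans Hij Hj.
  have Hj' : nth 0 p j \in p by apply: mem_nth.
  move: (Hdv _ Hi) (Hdv _ Hj') => /dvdnP [a ->] /dvdnP [b ->].
  rewrite !mulnK //. rewrite ltn_pmul2r //.
- apply/eqP; rewrite -(eqn_pmul2r Hd0) mul1n gcd_seq_map_div //.
- move=> k; rewrite size_map => Hk; rewrite -map_take (nth_map 0) // => /(im_mulback _).
  have Hkp : nth 0 p k \in p by apply: mem_nth.
  rewrite mulnC divnK ?Hdv //.
  have := Hind k; rewrite size_rcons take_rc ?nth_rcons ?Hk; last by lia.
  move=> H1 H2; apply: (H1 (leqW Hk)); apply: H2 => a /mem_take; exact: Hdv.
Qed.

Lemma lemA h s : invs s -> size s = h.+1 -> 2 ^ h.+1 - 1 <= nth 0 s h.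
Proof.
elim: h s => [|h IH] s Hs Hsz.
  case: Hs => _ _ _ Hind; have := Hind 0; rewrite Hsz take0 => /(_ isT) H.
  rewrite expn1; case E: (nth 0 s 0) H => [|k] H //; exfalso; apply: H; constructor.
case/lastP: s Hs Hsz => [|p r] // Hs; rewrite size_rcons => -[Hp].
have [Hd2 _ _ Hdv Hinv'] := glue_facts p r h Hs Hp.
have := IH _ Hinv'; rewrite size_map Hp => /(_ erefl).
rewrite (nth_map 0) ?Hp //.
case: Hs => Hinc _ _ _.
have := Hinc h h.+1 (ltnSn h); rewrite size_rcons Hp ltnSn => /(_ isT).
rewrite !nth_rcons Hp ltnSn ltnn eqxx.
have Hm : nth 0 p h \in p by apply: mem_nth; rewrite Hp.
rewrite -(divnK (Hdv _ Hm)).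
set q := nth 0 p h %/ gcd_seq p. set d := gcd_seq p in Hd2 *.
move=> Hlt Hq.
have H2 : 2 * q <= q * d by rewrite mulnC leq_mul2l Hd2 orbT.
have Hx : 0 < 2 ^ h.+1 by rewrite expn_gt0.
rewrite mulnK in Hq; last by apply: ltn_trans Hd2.
rewrite expnS. lia.
Qed.

Lemma lemC p r n g : invs (rcons p r) -> size p = n.+1 ->
  let d := gcd_seq p in
  ~ in_monoid (map (fun x => x %/ d) p) g ->
  ~ in_monoid (rcons p r) (d * g + (d - 1) * r).
Proof.
move=> Hs Hp d Hg Hin.
have [Hd2 Hcop Hr' Hdv _] := glue_facts p r n Hs Hp.
have Hd0 : 0 < d by apply: ltn_trans Hd2.
have [m [x [Hx Heq]]] := im_rcons _ _ _ Hin.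
have Hdx : d %| x := im_dvd _ _ _ Hdv Hx.
have Hx' := im_div _ _ _ Hdv Hx.
move: Hdx Heq Hx' => /dvdnP [x' ->]; rewrite mulnK ?(ltn_trans _ Hd2) // => Heq Hx'.
case: (leqP (d - 1) m) => Hm.
- have [k Hk] : exists k, m = (d - 1) + k by exists (m - (d - 1)); lia.
  rewrite Hk mulnDl in Heq.
  have Heq2 : d * g = x' * d + k * r by lia.
  have : d %| k * r.
    have : d %| d * g by exact: dvdn_mulr.
    by rewrite Heq2 dvdn_addr // dvdn_mull.
  rewrite Gauss_dvdl // => /dvdnP [t Ht].
  apply: Hg; have -> : g = x' + t * r.
    apply/eqP; rewrite -(eqn_pmul2l Hd0) Heq2 Ht; apply/eqP; ring.
  by apply: im_add => //; apply: im_mul.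
- have Heq2 : (d - 1 - m) * r + d * g = x' * d.
    have Hs' : (d - 1) * r = (d - 1 - m) * r + m * r by rewrite -mulnDl subnK // ltnW.
    lia.
  have : d %| (d - 1 - m) * r.
    have : d %| x' * d by exact: dvdn_mull.
    by rewrite -Heq2 dvdn_addl // dvdn_mulr.
  rewrite Gauss_dvdl // => /dvdn_leq; lia.
Qed.

Lemma lemB n s : invs s -> size s = n.+2 ->
  exists g, ~ in_monoid s g /\ n * 2 ^ n.+2 + 2 <= g.+1.
Proof.
elim: n s => [|n IH] s Hs Hsz.
  case: s Hs Hsz => [|a [|b [|]]] // Hs _.
  exists 1; split; last by [].
  case: Hs => Hinc _ _ Hind.
  have Ha : 0 < a.
    have := Hind 0 isT; rewrite take0 /=; case: a {Hinc Hind} => // H; exfalso; apply: H; constructor.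
  have Ha1 : a != 1.
    apply/negP => /eqP Ha1; have := Hind 1 isT; rewrite /= Ha1; apply; exact: im_one.
  have Hab : a < b by exact: (Hinc 0 1 isT isT).
  move=> Hin; suff : (1:nat) != 1 by [].
  apply: (im_ge2 [:: a; b] 1) Hin => x; rewrite !in_cons orbF => /orP [] /eqP ->; lia.
case/lastP: s Hs Hsz => [|p r] // Hs; rewrite size_rcons => -[Hp].
have [Hd2 _ _ Hdv Hinv'] := glue_facts p r n.+1 Hs Hp.
have [g [Hg Hgb]] := IH _ Hinv' ltac:(by rewrite size_map Hp).
have HN := lemC p r n.+1 g Hs Hp Hg.
have HA := lemA n.+2 _ Hs ltac:(by rewrite size_rcons Hp).
rewrite nth_rcons Hp ltnn eqxx in HA.
eexists; split; first exact: HN.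
set d := gcd_seq p in Hd2 *.
have H1 : 2 * g <= d * g by rewrite leq_mul2r Hd2 orbT.
have H2 : r <= (d - 1) * r by rewrite -{1}(mul1n r) leq_mul2r; apply/orP; right; lia.
have Hx : 0 < 2 ^ n.+2 by rewrite expn_gt0.
move: HA Hgb; rewrite [2 ^ n.+3]expnS. set X := 2 ^ n.+2. nia.
Qed.

Theorem corollary4p3 (G : nat -> Prop) (r : seq nat) (h c : nat) :
  numerical_semigroup G ->
  minimal_generating_system G r ->
  sorted ltn r ->
  size r = h.+1 ->
  2 <= h ->
  telescopic G r ->
  is_conductor G c ->
  let rh := nth 0 r h in
  let dh := gcd_seq (take h r) in
  (2 ^ h.+1 - 1 <= rh)%N /\
  ((rh%:R : rat) <= (c%:R / (dh%:R - 1)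
     - ((h - 2) * 2 ^ h + 2)%:R * dh%:R / (dh%:R - 1) + 1))%R /\
  ((c%:R / (dh%:R - 1)
     - ((h - 2) * 2 ^ h + 2)%:R * dh%:R / (dh%:R - 1) + 1 : rat)
   <= c%:R - ((h - 2) * 2 ^ h)%:R - 1)%R.
Proof.
move=> [HG0 _ [N0 HN0]] [Huniq HGr Hmin] Hsort Hsz Hh [_ [_ Hfree]] [Hc _] rh dh.
rewrite {}/rh {}/dh.
have Hinv : invs r.
  split => //.
  - move=> i j Hij Hj; apply: (sorted_ltn_nth ltn_trans 0 Hsort) => //; rewrite inE //; lia.
  - have H1 : gcd_seq r %| N0 by apply: (im_dvd r _ _ (gcd_seq_dvd r)); apply/HGr/HN0.
    have H2 : gcd_seq r %| N0 + 1 by apply: (im_dvd r _ _ (gcd_seq_dvd r)); apply/HGr/HN0; lia.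
    by apply/eqP; rewrite -dvdn1 -(dvdn_addr 1 H1).
  - move=> k Hk Hin.
    have Ha : nth 0 r k \in r by apply: mem_nth.
    apply: (Hmin _ Ha); apply: (im_sub (take k r)) Hin => y Hy.
    rewrite rem_filter // mem_filter (mem_take Hy) andbT /=.
    move: Huniq; rewrite -{1}(cat_take_drop k r) cat_uniq => /and3P [_ /hasPn Hd _].
    have Hdr : nth 0 r k \in drop k r.
      have <- : nth 0 (drop k r) 0 = nth 0 r k by rewrite nth_drop addn0.
      by apply: mem_nth; rewrite size_drop subn_gt0.
    apply/negP => /eqP Hy'; move: (Hd _ Hdr); by rewrite -Hy' Hy.
have HGc : forall N, ~ in_monoid r N -> N < c.
  move=> N HN; rewrite ltnNge; apply/negP => /Hc /HGr; exact: HN.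
case: h Hsz Hh => [|[|n]] // Hsz _.
have -> : n.+2 - 2 = n by lia.
case/lastP: r Hinv HGc Hsz {HGr Hmin Hsort Huniq Hfree Hc} => [|p x] // Hinv HGc.
rewrite size_rcons => -[Hp].
rewrite nth_rcons Hp ltnn eqxx -Hp take_rc // take_size.
have HA := lemA n.+2 _ Hinv ltac:(by rewrite size_rcons Hp).
rewrite nth_rcons Hp ltnn eqxx in HA.
rewrite Hp; split; first exact: HA.
have [Hd2 _ _ Hdv Hinv'] := glue_facts p x n.+1 Hinv Hp.
have [g [Hg Hgb]] := lemB n _ Hinv' ltac:(by rewrite size_map Hp).
have HN := HGc _ (lemC p x n.+1 g Hinv Hp Hg).
set d := gcd_seq p in Hd2 HN *.
set K := n * 2 ^ n.+2.
have F : (d - 1) * x + d * (K + 2) + 1 <= c + d.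
  have : d * (K + 2) <= d * g.+1 by rewrite leq_mul2l Hgb orbT.
  nia.
have Fr : (((d - 1) * x + d * (K + 2) + 1)%:R <= (c + d)%:R :> rat)%R by rewrite ler_nat.
rewrite !natrD !natrM natrB ?(ltnW Hd2) // in Fr.
rewrite natrD.
have HD : (2%:R <= d%:R :> rat)%R by rewrite ler_nat.
have HD1 : (0 < d%:R - 1 :> rat)%R by lra.
have HC : (0 <= c%:R :> rat)%R by rewrite ler0n.
have HK : (0 <= K%:R :> rat)%R by rewrite ler0n.
have HX : (0 <= x%:R :> rat)%R by rewrite ler0n.
have E : (c%:R / (d%:R - 1) - (K%:R + 2%:R) * d%:R / (d%:R - 1) + 1 =
   (c%:R - (K%:R + 2%:R) * d%:R + (d%:R - 1)) / (d%:R - 1) :> rat)%R.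
  by field; apply/eqP => H0; move: HD1; rewrite H0 ltxx.
rewrite E ler_pdivlMr // ler_pdivrMr //.
have HCD : (0 <= c%:R * (d%:R - 2) :> rat)%R by apply: mulr_ge0 => //; lra.
split; nra.
Qed.
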